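(* Let $(A,\cdot,\alpha)$ be a Hom-associative algebra, $(V,l,r,\beta)$ an $A$-bimodule and $T:V\to A$ an $\mathcal{O}$-operator associated to $(V,l,r,\beta)$. Define $u\triangleright v:=l(T(u))v$ and $u\triangleleft v:=r(T(v))u$ for $u,v\in V$. Then $(V,\triangleright,\triangleleft,\beta)$ is a Hom-$L$-dendriform algebra.
   Context: A Hom-associative algebra $(A,\cdot,\alpha)$: $\cdot$ bilinear, $\alpha$ linear, $(x\cdot y)\cdot\alpha(z)=\alpha(x)\cdot(y\cdot z)$. An $A$-bimodule $(V,l,r,\beta)$: a vector space $V$, linear $\beta:V\to V$, linear maps $l,r:A\to\mathfrak{gl}(V)$ with $l(x\cdot y)\beta=l(\alpha(x))l(y)$, $r(\alpha(y))l(x)=l(\alpha(x))r(y)$, $r(\alpha(y))r(x)=r(x\cdot y)\beta$ for all $x,y\in A$. An $\mathcal{O}$-operator associated to $(V,l,r,\beta)$ is a linear $T:V\to A$ with $\alpha T=T\beta$ and $T(u)\cdot T(v)=T(l(T(u))v+r(T(v))u)$ for all $u,v\in V$. A Hom-$L$-dendriform algebra is a vector space $V$ with bilinear $\triangleleft,\triangleright$ and linear $\beta$ such that for all $u,v,w$: $\beta(u)\triangleright(v\triangleright w)=(u\triangleright v)\triangleright\beta(w)+(u\triangleleft v)\triangleright\beta(w)+\beta(v)\triangleright(u\triangleright w)-(v\triangleleft u)\triangleright\beta(w)-(v\triangleright u)\triangleright\beta(w)$ and $\beta(u)\triangleright(v\triangleleft w)=(u\triangleright v)\triangleleft\beta(w)+\beta(v)\triangleleft(u\triangleright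 w)+\beta(v)\triangleleft(u\triangleleft w)-(v\triangleleft u)\triangleleft\beta(w)$. *)

(* Defs.v *)
From HB Require Import structures.
From mathcomp Require Import all_boot all_algebra.
Set Implicit Arguments. Unset Strict Implicit. Unset Printing Implicit Defensive.
Import GRing.Theory.
Local Open Scope ring_scope.

Definition is_bilinear (K : fieldType) (U W X : lmodType K) (f : U -> W -> X) :=
  (forall w, linear (fun u => f u w)) /\ (forall u, linear (f u)).

Definition HomAssociative (K : fieldType) (A : lmodType K)
  (mul : A -> A -> A) (alpha : A -> A) :=
  [/\ is_bilinear mul, linear alpha &
      forall x y z, mul (mul x y) (alpha z) = mul (alpha x) (mul y z)].

Definition HomBimodule (K : fieldType) (A V : lmodType K)
  (mul : A -> A -> A) (alpha : A -> A)
  (l r : A -> V -> V) (beta : V -> V) :=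
  [/\ is_bilinear l, is_bilinear r, linear beta &
      [/\ (forall x y v, l (mul x y) (beta v) = l (alpha x) (l y v)),
          (forall x y v, r (alpha y) (l x v) = l (alpha x) (r y v)) &
          (forall x y v, r (alpha y) (r x v) = r (mul x y) (beta v))]].

Definition OOperator (K : fieldType) (A V : lmodType K)
  (mul : A -> A -> A) (alpha : A -> A)
  (l r : A -> V -> V) (beta : V -> V) (T : V -> A) :=
  [/\ linear T,
      (forall v, alpha (T v) = T (beta v)) &
      (forall u v, mul (T u) (T v) = T (l (T u) v + r (T v) u))].

(* Hom-L-dendriform algebra (V, lt, gt, beta): lt = triangleleft, gt = triangleright *)
Definition HomLDendriform (K : fieldType) (V : lmodType K)
  (lt gt : V -> V -> V) (beta : V -> V) :=
  [/\ is_bilinear lt, is_bilinear gt, linear beta,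
      (forall u v w,
         gt (beta u) (gt v w) =
         gt (gt u v) (beta w) + gt (lt u v) (beta w) + gt (beta v) (gt u w)
         - gt (lt v u) (beta w) - gt (gt v u) (beta w)) &
      (forall u v w,
         gt (beta u) (lt v w) =
         lt (gt u v) (beta w) + lt (beta v) (gt u w) + lt (beta v) (lt u w)
         - lt (lt v u) (beta w))].

(* Main.v *)
Require Import Defs.
From HB Require Import structures.
From mathcomp Require Import all_boot all_algebra.
Local Open Scope ring_scope.
Import GRing.Theory.

Section H.
Variables (K : fieldType) (U W : lmodType K).
Lemma linD (f : U -> W) : linear f -> forall x y, f (x + y) = f x + f y.
Proof. by move=> h x y; have := h 1 x y; rewrite !scale1r. Qed.
End H.
Arguments linD {K U W} f.

Theorem mainTheorem17 (K : fieldType) (A V : lmodType K)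
  (mul : A -> A -> A) (alpha : A -> A)
  (l r : A -> V -> V) (beta : V -> V) (T : V -> A) :
  HomAssociative mul alpha ->
  HomBimodule mul alpha l r beta ->
  OOperator mul alpha l r beta T ->
  HomLDendriform (fun u v => r (T v) u) (fun u v => l (T u) v) beta.
Proof.
case=> _ _ _ [[l1 l2] [r1 r2] hb [b1 b2 b3]] [hT hTb hO].
have TD := linD T hT.
have lD : forall x y w, l (x + y) w = l x w + l y w by move=> x y w; exact: (linD _ (l1 w)).
have rD : forall x y w, r (x + y) w = r x w + r y w by move=> x y w; exact: (linD _ (r1 w)).
split.
- split=> [w|u] a x y /=; first exact: r2.
  by rewrite (hT a) (r1 u).
- split=> [w|u] a x y /=; last exact: l2.
  by rewrite (hT a) (l1 w).
- exact: hb.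
- move=> u v w /=.
  rewrite -!hTb -(b1 (T u)) hO TD lD.
  have -> : l (alpha (T v)) (l (T u) w) = l (T (l (T v) u)) (beta w) + l (T (r (T u) v)) (beta w).
    by rewrite -b1 hO TD lD.
  by rewrite addrA addrK addrK.
- move=> u v w /=.
  rewrite -!hTb -b2 -[_ + r (T (l (T u) w)) _ + _]addrA.
  have -> : r (T (l (T u) w)) (beta v) + r (T (r (T w) u)) (beta v) = r (alpha (T w)) (r (T u) v).
    by rewrite b3 hO TD rD.
  by rewrite addrK.
Qed.
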